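(* Let $n\in\mathbb N$, $\varepsilon\in[0,\frac18]$ and let $C\subset A_n$ be a von Neumann subalgebra such that $\frac1n\sum_{i=1}^n\|X_{n,i}-\mathrm E_C(X_{n,i})\|_2^2\leq\varepsilon$. Then $\dim(Cz)\geq 2^{\,n-\mathrm H(4\varepsilon)n-3}$ for any projection $z\in C$ with $\tau(z)\geq\frac12$.
   Context: $A_n=\bigotimes_{k=1}^n\mathbb C^2\cong\mathbb C^{2^n}$ (equivalently $L^\infty(\{0,1\}^n)$) with its normalized trace $\tau$ (uniform measure) and $\|x\|_2=\tau(x^*x)^{1/2}$. $X_{n,i}=1\otimes\cdots\otimes\sigma\otimes\cdots\otimes1$ with $\sigma=(1,-1)\in\mathbb C^2$ in the $i$-th position. Von Neumann subalgebras are unital $*$-subalgebras; $\mathrm E_C$ is the trace-preserving conditional expectation onto $C$. $\mathrm H(\delta)=-\delta\log_2\delta-(1-\delta)\log_2(1-\delta)$ is the binary entropy function (with the convention $\mathrm H(0)=0$). *)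

(* Defs.v *)
From HB Require Import structures.
From mathcomp Require Import all_boot all_order all_algebra.
From mathcomp Require Import complex.
From mathcomp Require Import reals exp.
Set Implicit Arguments. Unset Strict Implicit. Unset Printing Implicit Defensive.
Import Order.TTheory GRing.Theory Num.Theory.
Local Open Scope ring_scope.
Local Open Scope complex_scope.

(* The hypercube {0,1}^n, encoded as boolean functions on 'I_n
   (false = 0, true = 1). *)
Notation cube n := {ffun 'I_n -> bool}.

(* A_n = L^oo({0,1}^n) = C^{2^n}: complex-valued functions on the cube,
   a finite-dimensional vector space over C = R[i]. *)
Notation An R n := {ffun cube n -> (R[i])^o}.

Section Defs.
Variables (R : realType) (n : nat).

Definition amul (x y : An R n) : An R n := [ffun w => x w * y w].
Definition aone : An R n := [ffun => 1].
Definition aadj (x : An R n) : An R n := [ffun w => (x w)^*].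

Definition tau (x : An R n) : R[i] := (2 ^+ n)^-1 * \sum_(w : cube n) x w.

Definition norm2sq (x : An R n) : R[i] := tau (amul (aadj x) x).

(* X_{n,i} = 1 (x) ... (x) sigma (x) ... (x) 1, sigma = (1,-1) *)
Definition Xn (i : 'I_n) : An R n := [ffun w : cube n => if w i then -1 else 1].

(* von Neumann subalgebra: unital *-subalgebra (finite dimension, so
   automatically weakly closed) *)
Definition is_vN_subalg (C : {vspace An R n}) : Prop :=
  [/\ aone \in C,
      forall x y, x \in C -> y \in C -> amul x y \in C &
      forall x, x \in C -> aadj x \in C].

Definition apos (x : An R n) : Prop := forall w, 0 <= x w.

Definition is_trace_cond_exp (C : {vspace An R n}) (E : An R n -> An R n)
  : Prop :=
  [/\ forall x, E x \in C,
      forall c, c \in C -> E c = c,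
      forall (a : R[i]) x y, E (a *: x + y) = a *: E x + E y,
      forall c x, c \in C -> E (amul c x) = amul c (E x) /\ E (amul x c) = amul (E x) c &
      forall x, apos x -> apos (E x)]
  /\ (forall x, tau (E x) = tau x).

Definition is_proj (z : An R n) : Prop := aadj z = z /\ amul z z = z.

Definition vmulr (C : {vspace An R n}) (z : An R n) : {vspace An R n} :=
  (linfun (fun x => amul x z) @: C)%VS.

End Defs.

Definition log2 (R : realType) (x : R) : R := ln x / ln 2.
Definition Hbin (R : realType) (d : R) : R :=
  if (d == 0) || (d == 1) then 0
  else - d * log2 d - (1 - d) * log2 (1 - d).

(* Main.v *)
Require Import Defs.
From HB Require Import structures.
From mathcomp Require Import all_boot all_order all_algebra.
From mathcomp Require Import complex.
From mathcomp Require Import reals exp.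
From mathcomp Require Import sequences.
From mathcomp Require Import ring lra.
Import Order.TTheory GRing.Theory Num.Theory.
Local Open Scope ring_scope.
Local Open Scope complex_scope.
Set Warnings "-notation-overridden,-ambiguous-paths".
Lemma sum_ind (R : numDomainType) (I : finType) (B : {pred I}) (P : pred I) :
  \sum_(v in B) ((P v)%:R : R) = #|[set v in B | P v]|%:R.
Proof.
rewrite -sum1_card natr_sum [RHS]big_mkcond [LHS]big_mkcond /=.
by apply: eq_bigr => v _; rewrite !inE; case: (v \in B); case: (P v).
Qed.

Definition sgn (R : numDomainType) (b : bool) : R := if b then -1 else 1.

Lemma bit_bound (R : realFieldType) (I : finType) (B : {set I}) (b : I -> bool) :
  (0 < #|B|)%N ->
  \sum_(v in B) ((b v != (#|B| < 2 * #|[set v in B | b v]|)%N)%:R : R) <=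
  (\sum_(v in B) (sgn R (b v) - (\sum_(u in B) sgn R (b u)) / #|B|%:R)^+2) / 2.
Proof.
move=> B0.
set N := #|B|%:R; pose k : R := #|[set v in B | b v]|%:R.
have hN : 0 < N by rewrite ltr0n.
have hS : \sum_(u in B) sgn R (b u) = N - 2 * k.
  rewrite /k -sum_ind (eq_bigr (fun u => 1 - 2 * (b u)%:R)); last first.
    by move=> u _; rewrite /sgn; case: (b u) => /=; ring.
  by rewrite sumrB sumr_const -mulr_sumr.
set m := _ / N.
have hm : m * N = N - 2 * k by rewrite /m hS mulfVK // gt_eqF.
have hQ : \sum_(v in B) (sgn R (b v) - m)^+2 = N - 2 * m * (N - 2 * k) + N * m ^+ 2.
  rewrite (eq_bigr (fun v => (1 + m ^+ 2) - 2 * m * sgn R (b v))); last first.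
    by move=> v _; rewrite /sgn; case: (b v) => /=; ring.
  rewrite sumrB -mulr_sumr hS sumr_const -/N -mulr_natl; ring.
rewrite hQ.
have hk0 : 0 <= k by [].
have hkN : k <= N.
  by rewrite ler_nat; apply: subset_leq_card; apply/subsetP => v; by rewrite inE => /andP[].
case: ltnP => hc.
  have hc' : N < 2 * k by rewrite /k /N -natrM ltr_nat.
  rewrite (eq_bigr (fun v => 1 - (b v)%:R)); last first.
    by move=> v _; case: (b v); rewrite /= ?subrr ?subr0.
  rewrite sumrB sumr_const sum_ind -/N -/k.
  have : (N - k) * (N - 2 * k) <= 0 by rewrite mulr_ge0_le0 // ?subr_ge0 ?subr_le0 // ltW.
  nra.
have hc' : 2 * k <= N by rewrite /k /N -natrM ler_nat.
rewrite (eq_bigr (fun v => (b v)%:R)); last by move=> v _; case: (b v).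
rewrite sum_ind -/k.
have : 0 <= k * (N - 2 * k) by rewrite mulr_ge0 // subr_ge0.
nra.
Qed.

Section Core.
Variables (R : realType) (n : nat).
Local Notation T := (cube n).
Variable A : T -> {set T}.
Hypothesis hAin : forall w, w \in A w.
Hypothesis hAeq : forall w v, v \in A w -> A v = A w.

Lemma Asym v w : v \in A w -> w \in A v.
Proof. by move=> h; rewrite (hAeq _ _ h) hAin. Qed.

Lemma Acard_gt0 w : (0 < #|A w|)%N.
Proof. by apply/card_gt0P; exists w. Qed.

Lemma Acard_neq0 w : (#|A w|%:R : R) != 0.
Proof. by rewrite pnatr_eq0 -lt0n Acard_gt0. Qed.

Lemma atom_sum (f : T -> R) :
  \sum_w (\sum_(v in A w) f v) / #|A w|%:R = \sum_w f w.
Proof.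
transitivity (\sum_w \sum_(v in A w) f v / #|A v|%:R).
  apply: eq_bigr => w _; rewrite mulr_suml; apply: eq_bigr => v hv.
  by rewrite (hAeq _ _ hv).
rewrite (exchange_big_dep predT) //=.
apply: eq_bigr => v _.
rewrite (eq_bigl (fun w => w \in A v)); last first.
  by move=> w /=; apply/idP/idP; apply: Asym.
by rewrite sumr_const -[_ *+ #|A v|]mulr_natr mulfVK // Acard_neq0.
Qed.

Definition dist (v c : T) : nat := #|[set i | v i != c i]|.

Definition wt (lam : R) (c v : T) : R :=
  \prod_i (if v i != c i then lam else 1 - lam).

Lemma wt_sum lam c : \sum_v wt lam c v = 1.
Proof.
rewrite /wt -(bigA_distr_bigA (fun i b => if b != c i then lam else 1 - lam)) /=.
rewrite big1 // => i _; rewrite big_bool /=.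
by case: (c i) => /=; rewrite ?subrK // addrC subrK.
Qed.

Lemma wt_eq lam c v :
  wt lam c v = lam ^+ dist v c * (1 - lam) ^+ (n - dist v c).
Proof.
rewrite /wt (bigID (fun i => v i != c i)) /=.
rewrite (eq_bigr (fun _ => lam)); last by move=> i ->.
rewrite [X in _ * X](eq_bigr (fun _ => 1 - lam)); last by move=> i /negbTE ->.
rewrite !prodr_const /dist; congr (_ ^+ _ * _ ^+ _).
  by apply: eq_card => i; rewrite inE.
have hc := cardC [set i | v i != c i]; rewrite card_ord in hc.
rewrite -[X in (X - _)%N]hc addKn; apply: eq_card => i; by rewrite !inE.
Qed.


Lemma dist_le (v c : T) : (dist v c <= n)%N.
Proof. by rewrite /dist -[X in (_ <= X)%N]card_ord max_card. Qed.

Lemma ball_bound (lam : R) (c : T) : 0 <= lam <= 1/2 ->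
  (#|[set v : T | (dist v c)%:R <= lam * n%:R]|%:R : R)
    <= expR (Hbin lam * n%:R * ln 2).
Proof.
move=> /andP[l0 l12].
have [->|lpos] := eqVneq lam 0.
  rewrite /Hbin eqxx /= !mul0r expR0.
  apply: (@le_trans _ _ (#|[set c]|%:R)); last by rewrite cards1.
  rewrite ler_nat.
  apply: subset_leq_card; apply/subsetP => v; rewrite !inE.
  rewrite (ler_nat R _ 0) leqn0 cards_eq0 => /eqP h.
  apply/eqP/ffunP => i; apply/eqP; apply/negPn/negP => hi.
  by have := in_set0 i; rewrite -h inE hi.
have lgt0 : 0 < lam by rewrite lt_def lpos l0.
have l1 : 0 < 1 - lam by rewrite subr_gt0; apply: (le_lt_trans l12); lra.
have ln2 : 0 < ln (2 : R) by rewrite ln_gt0 // ltr1n.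
set X := Hbin lam * n%:R * ln 2.
have hX : - X = n%:R * (lam * ln lam + (1 - lam) * ln (1 - lam)).
  rewrite /X /Hbin (negbTE lpos) /=.
  have -> : (lam == 1) = false by apply/negbTE; apply: contraTneq l12 => ->; lra.
  rewrite /log2 /=; field; exact: lt0r_neq0.
have key v : (dist v c)%:R <= lam * n%:R -> expR (- X) <= wt lam c v.
  move=> hd; rewrite wt_eq.
  have e1 : expR (ln lam) = lam by rewrite lnK // posrE.
  have e2 : expR (ln (1 - lam)) = 1 - lam by rewrite lnK // posrE.
  rewrite -{1}e1 -e2 -!expRM_natl -expRD ler_expR hX natrB ?dist_le //.
  have hab : ln lam <= ln (1 - lam) by rewrite ler_ln ?posrE //; lra.
  set d := (dist v c)%:R in hd *; set a := ln lam; set b := ln (1 - lam).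
  have : (n%:R * lam - d) * (a - b) <= 0.
    by rewrite mulr_ge0_le0 // ?subr_le0 // subr_ge0 mulrC.
  lra.
set B := [set v | _].
have wt0 v : 0 <= wt lam c v.
  by apply: prodr_ge0 => i _; case: ifP => _; [exact: ltW | exact: ltW].
have : #|B|%:R * expR (- X) <= 1.
  rewrite mulr_natl -sumr_const -(wt_sum lam c).
  apply: le_trans (_ : \sum_(v in B) wt lam c v <= _).
    by apply: ler_sum => v; rewrite inE => /key.
  rewrite [X in _ <= X](bigID (fun v => v \in B)) /= lerDl.
  by apply: sumr_ge0 => v _; apply: wt0.
rewrite expRN => h.
have eX : 0 < expR X by apply: expR_gt0.
by rewrite -(@ler_pM2r _ (expR X)^-1) ?invr_gt0 // mulfV ?gt_eqF.
Qed.

Definition mm (i : 'I_n) (w : T) : R :=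
  (\sum_(v in A w) sgn R (v i)) / #|A w|%:R.
Definition ee (w : T) : R := \sum_i (sgn R (w i) - mm i w) ^+ 2.
Definition eb (w : T) : R := (\sum_(v in A w) ee v) / #|A w|%:R.

Lemma ee_ge0 w : 0 <= ee w.
Proof. by apply: sumr_ge0 => i _; apply: sqr_ge0. Qed.

Lemma eb_ge0 w : 0 <= eb w.
Proof.
by apply: divr_ge0; [apply: sumr_ge0 => v _; apply: ee_ge0 | apply: ler0n].
Qed.

Lemma dist_sum (v c : T) : (dist v c)%:R = \sum_i ((v i != c i)%:R : R).
Proof.
rewrite sum_ind /dist; congr (_%:R); apply: eq_card => i; by rewrite !inE.
Qed.

Definition cen w : T := [ffun i => (#|A w| < 2 * #|[set v in A w | v i]|)%N].

Lemma atom_dist w :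
  \sum_(v in A w) ((dist v (cen w))%:R : R) <= (\sum_(v in A w) ee v) / 2.
Proof.
set c := cen w.
rewrite (eq_bigr (fun v : T => \sum_i ((v i != c i)%:R : R))); last first.
  by move=> v _; rewrite dist_sum.
rewrite exchange_big /=.
have -> : \sum_(v in A w) ee v = \sum_i \sum_(v in A w) (sgn R (v i) - mm i v) ^+ 2.
  by rewrite /ee exchange_big.
rewrite mulr_suml.
apply: ler_sum => i _.
rewrite [X in _ <= X / 2](eq_bigr (fun v : T => (sgn R (v i) - (\sum_(u in A w) sgn R (u i)) / #|A w|%:R) ^+ 2)); last first.
  by move=> v hv; rewrite /mm (hAeq _ _ hv).
rewrite /c /cen (eq_bigr (fun v : T => ((v i != (#|A w| < 2 * #|[set v in A w | v i]|)%N)%:R : R))); last first.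
  by move=> v _; rewrite ffunE.
have := @bit_bound R T (A w) (fun v => v i) (Acard_gt0 w).
exact.
Qed.

Lemma atom_size (eps : R) w : 0 <= eps -> eps <= 1/8 ->
  eb w <= 4 * eps * n%:R ->
  #|A w|%:R <= 2 * expR (Hbin (4 * eps) * n%:R * ln 2).
Proof.
move=> e0 e8 hw.
set c := cen w.
have hd := atom_dist w; rewrite -/c in hd.
set r := 4 * eps * n%:R.
set N := #|A w|%:R.
have hN : 0 < N by rewrite ltr0n Acard_gt0.
have hsum : \sum_(v in A w) ((dist v c)%:R : R) <= N * r / 2.
  have hE : \sum_(v in A w) ee v <= r * N.
    by move: hw; rewrite /eb -/N ler_pdivrMr.
  apply: (le_trans hd); lra.
set Bl := [set v : T | (dist v c)%:R <= 4 * eps * n%:R].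
have hball : #|Bl|%:R <= expR (Hbin (4 * eps) * n%:R * ln 2).
  by apply: ball_bound; apply/andP; split; lra.
set D := A w :\: Bl.
have hID := cardsID Bl (A w).
have hI : (#|A w :&: Bl| <= #|Bl|)%N by apply: subset_leq_card; apply: subsetIr.
have hD : 2 * #|D|%:R <= N.
  have [r0|rpos] := eqVneq r 0.
    have -> : D = set0.
      apply/setP => v; rewrite !inE; apply/negbTE; apply/negP => /andP[hv hvA].
      move: hv; rewrite -/r r0 => /negP; apply.
      have := hsum; rewrite r0 mulr0 mul0r (bigD1 v) //= => h.
      have h2 : 0 <= \sum_(u in A w | u != v) ((dist u c)%:R : R) by apply: sumr_ge0.
      lra.
    by rewrite cards0 mulr0 ltW.
  have rgt0 : 0 < r by rewrite lt_def rpos /r mulr_ge0 // mulr_ge0 //; lra.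
  have : #|D|%:R * r <= N * r / 2.
    apply: le_trans hsum.
    rewrite [X in _ <= X](big_setID Bl) /= -/D.
    apply: le_trans (_ : \sum_(v in D) ((dist v c)%:R : R) <= _); last first.
      by rewrite lerDr; apply: sumr_ge0.
    rewrite mulr_natl -sumr_const; apply: ler_sum => v; rewrite !inE => /andP[hv _].
    by apply: ltW; rewrite ltNge.
  move=> h; rewrite -(ler_pM2r rgt0); lra.
have : N = #|A w :&: Bl|%:R + #|D|%:R by rewrite -natrD hID.
have : #|A w :&: Bl|%:R <= #|Bl|%:R :> R by rewrite ler_nat.
lra.
Qed.
Lemma card_cube : (#|T|%:R : R) = 2 ^+ n.
Proof. by rewrite card_ffun card_bool card_ord natrX. Qed.

Lemma core (eps : R) (Z : {set T}) : 0 <= eps -> eps <= 1/8 ->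
  (2 ^+ n : R) <= 2 * #|Z|%:R ->
  \sum_w ee w <= n%:R * eps * 2 ^+ n ->
  expR ((n%:R - Hbin (4 * eps) * n%:R - 3) * ln 2) <= \sum_(w in Z) (#|A w|%:R)^-1.
Proof.
move=> e0 e8 hZ hee.
set r := 4 * eps * n%:R.
have r0 : 0 <= r by rewrite /r; apply: mulr_ge0; [lra | apply: ler0n].
have heb : \sum_w eb w = \sum_w ee w by exact: atom_sum.
set Bad := [set w | r < eb w].
have hbad : 4 * #|Bad|%:R <= (2 ^+ n : R).
  have [rz|rpos] := eqVneq r 0.
    suff -> : Bad = set0 by rewrite cards0 mulr0 exprn_ge0.
    have hs : \sum_w eb w = 0.
      apply/le_anti/andP; split; last by apply: sumr_ge0 => w _; apply: eb_ge0.
      rewrite heb; apply: (le_trans hee).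
      have : n%:R * eps = 0 by move: rz; rewrite /r => h; lra.
      by move=> ->; rewrite mul0r.
    apply/setP => w; rewrite !inE rz.
    by rewrite (psumr_eq0P (fun w _ => eb_ge0 w) hs) // ltxx.
  have rgt0 : 0 < r by rewrite lt_def rpos r0.
  have : #|Bad|%:R * r <= r * 2 ^+ n / 4.
    apply: le_trans (_ : \sum_(w in Bad) eb w <= _).
      by rewrite mulr_natl -sumr_const; apply: ler_sum => w; rewrite inE => /ltW.
    apply: le_trans (_ : \sum_w eb w <= _).
      rewrite [X in _ <= X](bigID (fun w => w \in Bad)) /= lerDl.
      by apply: sumr_ge0 => w _; apply: eb_ge0.
    by rewrite heb; apply: (le_trans hee); rewrite /r; lra.
  move=> h; rewrite -(ler_pM2r rgt0); lra.
set G := Z :\: Bad.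
have hG : (2 ^+ n : R) <= 4 * #|G|%:R.
  have hID := cardsID Bad Z.
  have hI : (#|Z :&: Bad| <= #|Bad|)%N by apply: subset_leq_card; apply: subsetIr.
  have : #|Z|%:R = #|Z :&: Bad|%:R + #|G|%:R :> R by rewrite -natrD hID.
  have : #|Z :&: Bad|%:R <= #|Bad|%:R :> R by rewrite ler_nat.
  lra.
set Y := expR (Hbin (4 * eps) * n%:R * ln 2).
have Y0 : 0 < Y by apply: expR_gt0.
have hA w : w \in G -> #|A w|%:R <= 2 * Y.
  rewrite !inE => /andP[hw _]; apply: atom_size => //; rewrite -/r; by rewrite leNgt.
have h1 : #|G|%:R * (2 * Y)^-1 <= \sum_(w in Z) (#|A w|%:R)^-1.
  rewrite (big_setID Bad) /= -/G.
  apply: le_trans (_ : \sum_(w in G) (#|A w|%:R)^-1 <= _); last first.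
    by rewrite lerDr; apply: sumr_ge0 => w _; rewrite invr_ge0 ler0n.
  rewrite mulr_natl -sumr_const; apply: ler_sum => w hw.
  have h2Y : 0 < 2 * Y by rewrite mulr_gt0.
  have hAw : 0 < (#|A w|%:R : R) by rewrite ltr0n Acard_gt0.
  by rewrite lef_pV2 ?posrE // hA.
apply: le_trans h1.
have e2 : expR (ln 2) = 2 :> R by rewrite lnK // posrE.
have -> : (n%:R - Hbin (4 * eps) * n%:R - 3) * ln 2 =
   n%:R * ln 2 - Hbin (4 * eps) * n%:R * ln 2 - 3%:R * ln 2 by ring.
rewrite !expRB !expRM_natl e2 -/Y.
rewrite invrM ?unitfE ?gt_eqF //.
have Yi : 0 < Y^-1 by rewrite invr_gt0.
rewrite [(2 * Y)^-1]invrM ?unitfE ?gt_eqF //.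
set yi := Y^-1 in Yi *.
have : 0 <= yi * (4 * #|G|%:R - 2 ^+ n) by rewrite mulr_ge0 // ?subr_ge0 // ltW.
nra.
by rewrite mulr_gt0.
Qed.

End Core.
Definition rmz (R : realType) (n : nat) (z : An R n) (x : An R n) : An R n :=
  amul x z.
Arguments rmz {R n}.

Lemma rmz_lin (R : realType) (n : nat) (z : An R n) :
  linear (rmz z).
Proof.
move=> a x y; apply/ffunP => u; rewrite /rmz /amul !ffunE /=.
by rewrite mulrDl -scalerAl.
Qed.

HB.instance Definition _ (R : realType) (n : nat) (z : An R n) :=
  GRing.isLinear.Build R[i] (An R n) (An R n) _ (rmz z) (@rmz_lin R n z).

Section Glue.
Variables (R : realType) (n : nat) (C : {vspace An R n}).
Local Notation T := (cube n).
Local Notation AA := (An R n).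
Hypothesis hC : is_vN_subalg C.

Definition atom (w : T) : {set T} :=
  [set v : T | [forall j : 'I_(\dim C),
     tnth (vbasis C) j v == tnth (vbasis C) j w]].

Lemma atom_in w : w \in atom w.
Proof. by rewrite inE; apply/forallP. Qed.

Lemma atom_eq w v : v \in atom w -> atom v = atom w.
Proof.
rewrite inE => /forallP h; apply/setP => u; rewrite !inE.
apply/forallP/forallP => H j.
  by rewrite (eqP (H j)) (h j).
by rewrite (eqP (H j)) eq_sym (h j).
Qed.

Lemma const_atom c w v : c \in C -> v \in atom w -> c v = c w.
Proof.
move=> hc; rewrite inE => /forallP h.
rewrite (coord_vbasis hc) !sum_ffunE; apply: eq_bigr => j _; rewrite !ffunE.
by have := h j; rewrite (tnth_nth 0) => /eqP ->.
Qed.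

Definition ind (S : {set T}) : AA := [ffun v => (v \in S)%:R].

Lemma ind_atom_mem w : ind (atom w) \in C.
Proof.
case: hC => hone hmul hadj.
pose b j := tnth (vbasis C) j.
pose f v : AA := match [pick j | b j v != b j w] with
  | Some j => (b j w - b j v)^-1 *: (b j - (b j v) *: aone R n)
  | None => aone R n end.
have bC j : b j \in C by apply: vbasis_mem; apply: mem_tnth.
have fC v : f v \in C.
  rewrite /f; case: pickP => [j _|_] //.
  by apply: memvZ; apply: memvB => //; apply: memvZ.
have hP : \big[@amul R n/aone R n]_(v | v \notin atom w) f v = ind (atom w).
  apply/ffunP => u.
  rewrite (big_morph (fun x : AA => x u) (id1 := 1) (op1 := *%R)); first last.
  - by rewrite ffunE.
  - by move=> x y; rewrite ffunE.
  rewrite ffunE; case: (boolP (u \in atom w)) => hu.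
    rewrite big1 // => v hv; rewrite /f; case: pickP => [j hj|hn]; last by rewrite ffunE.
    rewrite !ffunE /=.
    have -> : b j u = b j w.
      by rewrite /b; apply: const_atom => //; apply: vbasis_mem; apply: mem_tnth.
    rewrite -[(b j v)%:A]/(b j v * 1) mulr1.
    by rewrite -[_ *: _]/(_ * _) mulVf // subr_eq0 eq_sym.
  rewrite (bigD1 u) //= /f; case: pickP => [j hj|hn].
    rewrite !ffunE /= -[(b j u)%:A]/(b j u * 1) mulr1 subrr.
    by rewrite -[_ *: 0]/(_ * 0) mulr0 mul0r.
  exfalso; move: hu; rewrite inE => /forallP; apply => j.
  by have := hn j; rewrite /b /= => /negbFE.
rewrite -hP; apply: (big_ind (fun x : AA => x \in C)) => //; by move=> x y; apply: hmul.
Qed.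

Lemma sum_amul_ind S (y : AA) :
  \sum_u (amul (ind S) y) u = \sum_(u in S) y u.
Proof.
rewrite [RHS]big_mkcond; apply: eq_bigr => u _; rewrite !ffunE.
by case: (u \in S); rewrite ?mul1r ?mul0r.
Qed.

Lemma E_atom E x w : is_trace_cond_exp C E ->
  (E x) w = (\sum_(v in atom w) x v) / #|atom w|%:R.
Proof.
case => -[hEC hEid hElin hEmod hEpos] htau.
have hm := (hEmod _ x (ind_atom_mem w)).1.
have := htau (amul (ind (atom w)) x); rewrite hm /tau.
have h2 : ((2 : R[i]) ^+ n)^-1 != 0 by rewrite invr_eq0 expf_neq0 // pnatr_eq0.
move/(mulfI h2); rewrite !sum_amul_ind => <-.
rewrite (eq_bigr (fun _ => E x w)); last by move=> v hv; apply: const_atom.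
rewrite sumr_const -[E x w *+ _]mulr_natr mulfK // pnatr_eq0 -lt0n.
by apply/card_gt0P; exists w; apply: atom_in.
Qed.

Definition rep (w : T) : T := odflt w [pick v in atom w].

Lemma rep_in w : rep w \in atom w.
Proof. by rewrite /rep; case: pickP => [v hv|_] //=; apply: atom_in. Qed.

Lemma rep_eq w v : v \in atom w -> rep v = rep w.
Proof.
move=> h; rewrite /rep (atom_eq _ _ h); case: pickP => [//|hn].
by have := hn w; rewrite /= atom_in.
Qed.

Lemma count_le (Z : {set T}) (U : {vspace AA}) :
  (forall w v, w \in Z -> v \in atom w -> v \in Z) ->
  (forall r, r \in Z -> ind (atom r) \in U) ->
  \sum_(w in Z) (#|atom w|%:R : R)^-1 <= (\dim U)%:R.
Proof.
move=> hZ hU.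
set Reps := [set w in Z | rep w == w].
have -> : \sum_(w in Z) (#|atom w|%:R : R)^-1 = #|Reps|%:R.
  rewrite (partition_big rep (fun r => r \in Reps)); last first.
    move=> w hw; rewrite inE (hZ _ _ hw (rep_in w)) /=.
    by rewrite (rep_eq _ _ (rep_in w)).
  rewrite -sum1_card natr_sum; apply: eq_bigr => r hr.
  move: hr; rewrite inE => /andP[hrZ /eqP hrr].
  rewrite (eq_bigl (fun w => w \in atom r)); last first.
    move=> w /=; apply/andP/idP => [[hw /eqP <-]|hw].
      by rewrite (atom_eq _ _ (rep_in w)) atom_in.
    by split; [apply: hZ hw | rewrite (rep_eq _ _ hw) hrr].
  rewrite (eq_bigr (fun _ => (#|atom r|%:R : R)^-1)); last first.
    by move=> w hw; rewrite (atom_eq _ _ hw).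
  rewrite sumr_const -[_ *+ _]mulr_natr mulVf // pnatr_eq0 -lt0n.
  by apply/card_gt0P; exists r; exact: atom_in.
pose w0 : T := [ffun => false].
set e := enum Reps.
pose s := [seq ind (atom r) | r <- e].
have hsz : size s = size e by rewrite size_map.
have ue : uniq e by rewrite /e enum_uniq.
have hrep m : (m < size e)%N -> rep (nth w0 e m) = nth w0 e m.
  by move=> hm; have := mem_nth w0 hm; rewrite mem_enum inE => /andP[_ /eqP].
have hfree : free s.
  apply/(@freeP _ _ _ (in_tuple s)) => k hk i.
  have hi : (i < size e)%N by rewrite -hsz ltn_ord.
  have key j : (j < size e)%N -> nth 0 s j = ind (atom (nth w0 e j)).
    by move=> hj; rewrite (nth_map w0).
  have hne j : (j < size e)%N ->
      (nth w0 e i \in atom (nth w0 e j)) = (i == j :> nat).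
    move=> hj; apply/idP/eqP => [h|<-]; last by apply: atom_in.
    have := rep_eq _ _ h; rewrite !hrep // => /eqP.
    by rewrite nth_uniq // => /eqP.
  have := congr1 (fun f : AA => f (nth w0 e i)) hk.
  rewrite /= sum_ffunE ffunE.
  rewrite (eq_bigr (fun j => k j * (i == j :> nat)%:R)); last first.
    move=> j _; have hj : (j < size e)%N by rewrite -hsz ltn_ord.
    by rewrite ffunE key // ffunE hne.
  rewrite (bigD1 i) //= eqxx mulr1 big1 ?addr0 // => j hj.
  have -> : (nat_of_ord i == j) = false by apply/negbTE; rewrite eq_sym.
  by rewrite mulr0.
have hsub : (<<s>> <= U)%VS.
  apply/span_subvP => x /mapP[r hr ->]; apply: hU.
  by move: hr; rewrite mem_enum inE => /andP[].
have := hfree; rewrite /free => /eqP hd.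
rewrite cardE ler_nat -/e -hsz -hd; exact: dimvS.
Qed.

End Glue.

Theorem lemma6p6 (R : realType) (n : nat) (eps : R)
  (C : {vspace An R n}) (E : An R n -> An R n) :
  0 <= eps -> eps <= 1 / 8 ->
  is_vN_subalg C ->
  is_trace_cond_exp C E ->
  n%:R^-1 * \sum_(i < n) norm2sq (Xn R i - E (Xn R i)) <= eps%:C ->
  forall z : An R n, z \in C -> is_proj z -> 1 / 2 <= tau z ->
  (2 : R) `^ (n%:R - Hbin (4 * eps) * n%:R - 3) <= (\dim (vmulr C z))%:R.
Proof.
move=> e0 e8 hC hE hX z hzC [hzadj hzz] hz.
pose A := atom R n C.
have hAin : forall w, w \in A w := @atom_in R n C.
have hAeq : forall w v, v \in A w -> A v = A w := @atom_eq R n C.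
have hXv (i : 'I_n) (w : cube n) : (Xn R i) w = (sgn R (w i))%:C.
  by rewrite ffunE /sgn; case: (w i); rewrite ?rmorphN1 ?rmorph1.
have hEX (i : 'I_n) (w : cube n) : E (Xn R i) w = (mm R n A i w)%:C.
  rewrite (@E_atom R n C hC) // /mm rmorphM fmorphV rmorph_nat rmorph_sum.
  by congr (_ * _); apply: eq_bigr => v _; rewrite hXv.
have hsub (f g : An R n) w : (f - g) w = f w - g w by rewrite !ffunE.
have hmul (f g : An R n) w : (amul f g) w = f w * g w by rewrite ffunE.
have hadj (f : An R n) w : (aadj f) w = (f w)^* by rewrite ffunE.
have hnorm (i : 'I_n) : norm2sq (Xn R i - E (Xn R i)) =
    ((2 ^+ n)^-1 * \sum_(w : cube n) (sgn R (w i) - mm R n A i w) ^+ 2)%:C.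
  rewrite /norm2sq /tau rmorphM fmorphV rmorphXn rmorph_nat rmorph_sum.
  congr (_ * _); apply: eq_bigr => w _.
  by rewrite hmul hadj hsub hXv hEX -rmorphB conjc_real -rmorphM expr2.
move: hX; rewrite (eq_bigr _ (fun i _ => hnorm i)) -rmorph_sum.
rewrite -(rmorph_nat (real_complex R)) -fmorphV -rmorphM lecR => hX.
have hee : \sum_w ee R n A w <= n%:R * eps * 2 ^+ n.
  have eqS : \sum_w ee R n A w =
      \sum_(i < n) \sum_(w : cube n) (sgn R (w i) - mm R n A i w) ^+ 2.
    by rewrite /ee exchange_big.
  rewrite eqS; set S := \sum_(i < n) _.
  have [n0|npos] := posnP n.
    have -> : S = 0.
      by rewrite /S big1 // => i _; exfalso; case: i => m; rewrite n0.
    by rewrite !mulr_ge0 // exprn_ge0.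
  have hn : 0 < (n%:R : R) by rewrite ltr0n.
  have h2 : 0 < (2 ^+ n : R) by rewrite exprn_gt0.
  move: hX; rewrite -mulr_sumr mulrA => hX.
  have -> : S = (n%:R * 2 ^+ n) * (n%:R^-1 * (2 ^+ n)^-1 * S).
    by field; rewrite !gt_eqF.
  rewrite [_ * eps * _]mulrAC ler_pM2l ?mulr_gt0 //.
pose Z := [set w : cube n | z w == 1].
have hz01 w : (z w == 0) || (z w == 1).
  have := congr1 (fun f : An R n => f w) hzz; rewrite /= ffunE => h.
  have : z w * (z w - 1) = 0 by rewrite mulrBr mulr1 h subrr.
  by move/eqP; rewrite mulf_eq0 subr_eq0.
have hZ : (2 ^+ n : R) <= 2 * #|Z|%:R.
  have hsum : \sum_w z w = (#|Z|%:R : R)%:C.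
    rewrite rmorph_nat -sum1_card natr_sum [RHS]big_mkcond; apply: eq_bigr => w _.
    rewrite inE; case/orP: (hz01 w) => /eqP ->; by rewrite ?eqxx // eq_sym oner_eq0.
  have e1 : (1/2 : R[i]) = ((1/2 : R))%:C.
    by rewrite rmorphM rmorph1 fmorphV rmorph_nat.
  have e2 : ((2 : R[i]) ^+ n)^-1 * (#|Z|%:R : R)%:C = (((2 : R) ^+ n)^-1 * #|Z|%:R)%:C.
    by rewrite rmorphM fmorphV rmorphXn !rmorph_nat.
  move: hz; rewrite /tau hsum e1 e2 lecR => hz.
  have h2 : 0 < (2 ^+ n : R) by rewrite exprn_gt0.
  have : (2 ^+ n : R) * (1/2) <= 2 ^+ n * ((2 ^+ n)^-1 * #|Z|%:R).
    by rewrite ler_pM2l.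
  by rewrite mulrA mulfV ?gt_eqF // mul1r; lra.
have hZc (w v : cube n) : w \in Z -> v \in A w -> v \in Z.
  by move=> hw hv; move: hw; rewrite !inE (@const_atom R n C _ _ _ hzC hv).
have hU r : r \in Z -> ind R n (A r) \in vmulr C z.
  move=> hr.
  have -> : ind R n (A r) = (linfun (rmz z)) (ind R n (A r)).
    rewrite lfunE /rmz; apply/ffunP => u; rewrite !ffunE.
    case: (boolP (u \in A r)) => hu; last by rewrite mul0r.
    by rewrite (@const_atom R n C _ _ _ hzC hu); move: hr; rewrite inE => /eqP ->; rewrite mulr1.
  exact: memv_img (@ind_atom_mem R n C hC r).
have hcore := @core R n A hAin hAeq eps Z e0 e8 hZ hee.
have hcnt := @count_le R n C Z _ hZc hU.
rewrite /powR (_ : ((2 : R) == 0) = false); last by rewrite pnatr_eq0.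
exact: le_trans hcore hcnt.
Qed.
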